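(* Let $(V,\langle\cdot,\cdot\rangle)$ be a pseudo-Euclidean real vector space of signature $(k,l)$ with $k\ge2$, $l\ge2$, and let $Z\subseteq V$ be a subspace. The following are equivalent: (i) $q^+(Z)=k$; (ii) every positive $(k-1)$-plane $H\subseteq V$ is $Z$-extendable; (iii) every positive $(k-1)$-plane $H\subseteq V$ is $Z$-orthogonally-extendable.
   Context: A pseudo-Euclidean space of signature $(k,l)$ is a finite-dimensional real vector space with a symmetric non-degenerate bilinear form whose Sylvester diagonal form has $k$ entries $+1$ and $l$ entries $-1$. For a subspace $L$, $q^+(L)$ denotes the number of $+1$'s in a diagonalization of the restriction of the form to $L$, and $L^\perp$ is the orthogonal complement. A positive $r$-plane is an $r$-dimensional subspace on which the form is positive definite. For a subspace $Z$ and a positive $(k-1)$-plane $H$: $H$ is $Z$-extendable if there is $z\in Z$ with $H+\mathbb{R}z$ a positive $k$-plane; $H$ is $Z$-orthogonally-extendable if there is $z\in Z\cap H^\perp$ with $H+\mathbb{R}z$ a positive $k$-plane. *)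

(* Defs.v *)
(* A pseudo-Euclidean space of signature (k,l) is modelled as
   'rV[R]_n over a real field R, with bilinear form (u,v) |-> u G v^T for a
   symmetric invertible matrix G.  Subspaces are row spaces of matrices. *)
From HB Require Import structures.
From mathcomp Require Import all_boot all_order all_algebra.
Set Implicit Arguments. Unset Strict Implicit. Unset Printing Implicit Defensive.
Import Order.TTheory GRing.Theory Num.Theory.
Local Open Scope ring_scope.

Section PE.
Variables (R : realFieldType) (n : nat).

Definition bform (G : 'M[R]_n) (u v : 'rV[R]_n) : R := (u *m G *m v^T) 0 0.

Definition npos m (D : 'M[R]_m) : nat := #|[set i : 'I_m | 0 < D i i]|.
Definition nneg m (D : 'M[R]_m) : nat := #|[set i : 'I_m | D i i < 0]|.

Definition pseudo_euclidean (G : 'M[R]_n) (k l : nat) : Prop :=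
  [/\ G^T = G, G \in unitmx &
      exists B : 'M[R]_n, [/\ B \in unitmx, is_diag_mx (B *m G *m B^T),
                               npos (B *m G *m B^T) = k &
                               nneg (B *m G *m B^T) = l]].

Definition qplus_is m (G : 'M[R]_n) (L : 'M[R]_(m, n)) (p : nat) : Prop :=
  exists B : 'M[R]_(\rank L, n),
    [/\ (B == L)%MS, is_diag_mx (B *m G *m B^T) & npos (B *m G *m B^T) = p].

Definition pos_def_on m (G : 'M[R]_n) (L : 'M[R]_(m, n)) : Prop :=
  forall v : 'rV[R]_n, (v <= L)%MS -> v != 0 -> 0 < bform G v v.

Definition pos_plane m (G : 'M[R]_n) (r : nat) (L : 'M[R]_(m, n)) : Prop :=
  \rank L = r /\ pos_def_on G L.

Definition extendable m1 m2 (G : 'M[R]_n) (k : nat)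
    (Z : 'M[R]_(m1, n)) (H : 'M[R]_(m2, n)) : Prop :=
  exists z : 'rV[R]_n, (z <= Z)%MS /\ pos_plane G k (H + z)%MS.

Definition orth_extendable m1 m2 (G : 'M[R]_n) (k : nat)
    (Z : 'M[R]_(m1, n)) (H : 'M[R]_(m2, n)) : Prop :=
  exists z : 'rV[R]_n,
    [/\ (z <= Z)%MS,
        (forall h : 'rV[R]_n, (h <= H)%MS -> bform G h z = 0) &
        pos_plane G k (H + z)%MS].

End PE.

(* Main.v *)
Require Import Defs.
From HB Require Import structures.
From mathcomp Require Import all_boot all_order all_algebra zify.
Set Implicit Arguments. Unset Strict Implicit. Unset Printing Implicit Defensive.
Import Order.TTheory GRing.Theory Num.Theory.
Local Open Scope ring_scope.

Section S.
Variables (R : realFieldType) (n : nat) (G : 'M[R]_n).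
Hypothesis HG : G^T = G.
Local Notation b := (bform G).

Lemma bformC u v : b u v = b v u.
Proof.
rewrite /bform; transitivity ((u *m G *m v^T)^T 0 0); first by rewrite [RHS]mxE.
by rewrite !trmx_mul trmxK HG mulmxA.
Qed.
Lemma bformDl u v w : b (u + v) w = b u w + b v w.
Proof. by rewrite /bform !mulmxDl mxE. Qed.
Lemma bformZl a u w : b (a *: u) w = a * b u w.
Proof. by rewrite /bform -!scalemxAl mxE. Qed.
Lemma bformDr u v w : b w (u + v) = b w u + b w v.
Proof. by rewrite /bform linearD /= mulmxDr mxE. Qed.
Lemma bformZr a u w : b w (a *: u) = a * b w u.
Proof. by rewrite /bform linearZ /= -scalemxAr mxE. Qed.
Lemma bformNl u w : b (- u) w = - b u w.
Proof. by rewrite -scaleN1r bformZl mulN1r. Qed.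
Lemma bformNr u w : b w (- u) = - b w u.
Proof. by rewrite -scaleN1r bformZr mulN1r. Qed.
Lemma bform0l w : b 0 w = 0.
Proof. by rewrite /bform !mul0mx mxE. Qed.
Lemma bform0r w : b w 0 = 0.
Proof. by rewrite /bform trmx0 mulmx0 mxE. Qed.

Lemma entry_bform m1 m2 (A : 'M[R]_(m1, n)) (C : 'M[R]_(m2, n)) i j :
  (A *m G *m C^T) i j = b (row i A) (row j C).
Proof.
rewrite /bform -row_mul [LHS]mxE [RHS]mxE; by apply: eq_bigr => k _; rewrite !mxE.
Qed.

Lemma L1 m1 m2 (P : 'M[R]_(m1,n)) (H : 'M[R]_(m2,n)) : (\rank H < \rank P)%N ->
  exists y : 'rV[R]_n, [/\ (y <= P)%MS, y != 0 & forall h, (h <= H)%MS -> b h y = 0].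
Proof.
move=> lt.
set Pb := row_base P.
set M := Pb *m G *m H^T.
have rM : (\rank M <= \rank H)%N by rewrite (leq_trans (mxrankM_maxr _ _)) ?mxrank_tr.
have nzK : kermx M != 0 by rewrite -mxrank_eq0 mxrank_ker; lia.
set c := nz_row (kermx M).
have cK : c *m M = 0 by apply/sub_kermxP; exact: nz_row_sub.
have cnz: c != 0 by rewrite nz_row_eq0.
exists (c *m Pb); split.
- by rewrite (submx_trans (submxMl _ _)) // eq_row_base.
- apply: contra cnz => /eqP h; apply/eqP; apply: (row_free_inj (row_base_free P)).
  by rewrite h mul0mx.
- move=> h /submxP [a ->]; rewrite bformC /bform trmx_mul.
  have -> : c *m Pb *m G *m (H^T *m a^T) = c *m M *m a^T by rewrite /M /Pb !mulmxA.
  by rewrite cK !mul0mx mxE.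
Qed.

Lemma sqr_gt0' (x : R) : x != 0 -> 0 < x ^+ 2.
Proof. by move=> nz; rewrite lt0r sqr_ge0 sqrf_eq0 nz. Qed.

Lemma L2 m (H : 'M[R]_(m,n)) y : pos_def_on G H ->
  (forall h, (h <= H)%MS -> b h y = 0) -> 0 < b y y ->
  pos_def_on G (H + y)%MS /\ \rank (H + y)%MS = (\rank H).+1.
Proof.
move=> pH oy py.
have ynz : y != 0 by apply: contraTneq py => ->; rewrite bform0l ltxx.
split.
- move=> v /sub_addsmxP [[u w] /= ->] nz.
  move: nz; rewrite [w]mx11_scalar mul_scalar_mx; set c := w 0 0 => nz.
  have hH : (u *m H <= H)%MS by exact: submxMl.
  rewrite bformDl !bformDr !bformZl !bformZr (oy _ hH) [b y _]bformC (oy _ hH).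
  rewrite !mulr0 addr0 add0r mulrA -expr2.
  have [h0|h0] := eqVneq (u *m H) 0.
    rewrite h0 bform0l add0r; apply: mulr_gt0 => //; apply: sqr_gt0'.
    by apply: contra nz; rewrite h0 add0r => /eqP ->; rewrite scale0r.
  apply: (lt_le_trans (pH _ hH h0)); rewrite lerDl.
  by apply: mulr_ge0; [exact: sqr_ge0 | exact: ltW].
- have cap0 : (H :&: y)%MS = 0.
    apply/eqP; apply: contraT => nzc.
    have := nz_row_sub (H :&: y)%MS; rewrite sub_capmx => /andP [vH /submxP [a va]].
    move: nzc; rewrite -nz_row_eq0; move: vH va; set v := nz_row _ => vH va.
    have := oy _ vH; rewrite va [a]mx11_scalar mul_scalar_mx bformZl => /eqP.
    rewrite mulf_eq0 (gt_eqF py) orbF => /eqP ->.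
    by rewrite scale0r eqxx.
  by rewrite mxrank_disjoint_sum // rank_rV ynz addn1.
Qed.

Definition selS m (D : 'M[R]_m) (P : R -> bool) := [set i : 'I_m | P (D i i)].
Definition selE m (D : 'M[R]_m) (P : R -> bool) : 'M[R]_(#|selS D P|, m) :=
  \matrix_(j, i) ((enum_val j == i)%:R).

Lemma sum_pick m (x : 'I_m) (F : 'I_m -> R) : \sum_i ((x == i)%:R * F i) = F x.
Proof.
rewrite (bigD1 x) //= eqxx mul1r big1 ?addr0 // => i /negbTE.
by rewrite eq_sym => ->; rewrite mul0r.
Qed.

Lemma selE_mul m p (D : 'M[R]_m) P (A : 'M[R]_(m, p)) :
  selE D P *m A = \matrix_(j, k) A (enum_val j) k.
Proof.
apply/matrixP => j k; rewrite !mxE -[RHS](sum_pick (enum_val j) (fun i => A i k)).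
by apply: eq_bigr => i _; rewrite mxE.
Qed.

Lemma selE_conj m (D : 'M[R]_m) P (A : 'M[R]_m) :
  selE D P *m A *m (selE D P)^T = \matrix_(j, j') A (enum_val j) (enum_val j').
Proof.
rewrite selE_mul; apply/matrixP => j j'; rewrite !mxE -[RHS](sum_pick (enum_val j') (fun i => A (enum_val j) i)).
by apply: eq_bigr => i _; rewrite !mxE mulrC.
Qed.

Lemma selE_diag m (D : 'M[R]_m) P : is_diag_mx D ->
  selE D P *m D *m (selE D P)^T = diag_mx (\row_j D (enum_val j) (enum_val j)).
Proof.
move=> /is_diag_mxP dD; rewrite selE_conj; apply/matrixP => j j'; rewrite !mxE.
have [->|ne] := eqVneq j j'; first by rewrite mulr1n.
rewrite mulr0n dD //.
by apply: contra ne => /eqP/val_inj/enum_val_inj ->.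
Qed.

Lemma quad_diag m (a : 'rV[R]_m) d :
  (a *m diag_mx d *m a^T) 0 0 = \sum_j a 0 j ^+ 2 * d 0 j.
Proof.
rewrite mul_mx_diag mxE; apply: eq_bigr => j _; by rewrite !mxE mulrAC expr2.
Qed.

Section Sel.
Variables (m : nat) (B : 'M[R]_(m, n)).
Local Notation D := (B *m G *m B^T).
Hypothesis dD : is_diag_mx D.

Lemma sel_quad P (a : 'rV[R]_#|selS D P|) :
  b (a *m (selE D P *m B)) (a *m (selE D P *m B)) =
  \sum_j a 0 j ^+ 2 * D (enum_val j) (enum_val j).
Proof.
rewrite /bform.
have -> : a *m (selE D P *m B) *m G *m (a *m (selE D P *m B))^T =
  a *m (selE D P *m D *m (selE D P)^T) *m a^T by rewrite !trmx_mul !mulmxA.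
rewrite selE_diag // quad_diag; apply: eq_bigr => j _; by rewrite mxE.
Qed.

Lemma sel_pos : pos_def_on G (selE D (fun x => 0 < x) *m B).
Proof.
move=> v /submxP [a ->] nz; rewrite sel_quad.
have tge : forall j : 'I_#|selS D (fun x => 0 < x)|, true ->
    0 <= a 0 j ^+ 2 * D (enum_val j) (enum_val j).
  move=> j _; apply: mulr_ge0; first exact: sqr_ge0.
  by have := enum_valP j; rewrite inE => /ltW.
rewrite lt0r sumr_ge0 // andbT; apply/eqP => /(psumr_eq0P tge) z.
apply: (negP nz); apply/eqP.
have -> : a = 0 by apply/rowP => j; rewrite mxE; have := z j isT;
  have := enum_valP j; rewrite inE => /gt_eqF pj /eqP; rewrite mulf_eq0 pj orbF sqrf_eq0 => /eqP.
by rewrite mul0mx.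
Qed.

Lemma sel_npos v : (v <= selE D (fun x => ~~ (0 < x)%R) *m B)%MS -> b v v <= 0.
Proof.
move=> /submxP [a ->]; rewrite sel_quad; apply: sumr_le0 => j _.
apply: mulr_ge0_le0; first exact: sqr_ge0.
by have := enum_valP j; rewrite inE -leNgt.
Qed.

Lemma sel_rank P : row_free B -> \rank (selE D P *m B) = #|selS D P|.
Proof.
move=> fB; rewrite mxrankMfree //; apply/eqP; rewrite eqn_leq rank_leq_row /=.
have h : selE D P *m (selE D P)^T = 1%:M.
  rewrite -[X in X *m _ = _]mulmx1 selE_conj.
  apply/matrixP => j j'; rewrite !mxE; congr (_ %:R).
  by rewrite (inj_eq enum_val_inj).
by apply: leq_trans (mxrankM_maxl _ (selE D P)^T); rewrite h mxrank1.
Qed.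

Lemma sel_row P j : row j (selE D P *m B) = row (enum_val j) B.
Proof. by apply/rowP => k; rewrite selE_mul !mxE. Qed.

Lemma sel_cover P : (B <= selE D P *m B + selE D (fun x => ~~ P x) *m B)%MS.
Proof.
apply/row_subP => i.
case Pi: (P (D i i)).
  have Hi : i \in selS D P by rewrite inE.
  apply: (submx_trans _ (addsmxSl _ _)); apply: (eq_row_sub (enum_rank_in Hi i)).
  by rewrite sel_row enum_rankK_in.
have Hi : i \in selS D (fun x => ~~ P x) by rewrite inE Pi.
apply: (submx_trans _ (addsmxSr _ _)); apply: (eq_row_sub (enum_rank_in Hi i)).
by rewrite sel_row enum_rankK_in.
Qed.

Lemma sel_sub P : (selE D P *m B <= B)%MS.
Proof. exact: submxMl. Qed.
End Sel.

Lemma row_vec_sub (x y : 'rV[R]_n) : (x <= y)%MS -> exists c : R, x = c *: y.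
Proof. by move=> /submxP [a ->]; exists (a 0 0); rewrite [a]mx11_scalar mul_scalar_mx mxE eqxx mulr1n. Qed.

Lemma diag_ex r : forall m (L : 'M[R]_(m,n)), \rank L = r ->
  exists B : 'M[R]_(r, n), (B == L)%MS /\ is_diag_mx (B *m G *m B^T).
Proof.
elim: r => [|r IH] m L rL.
  have /eqP L0 : L == 0 by rewrite -mxrank_eq0 rL.
  exists 0; split; first by rewrite L0 !sub0mx.
  by apply/is_diag_mxP => -[].
set Lb := row_base L.
have LbL : (Lb :=: L)%MS by exact: eq_row_base.
have [deg|ndeg] := eqVneq (Lb *m G *m Lb^T) 0.
  rewrite -rL; exists Lb; split; first by apply/eqmxP.
  by rewrite deg mx0_is_diag.
have [i [j nz]] : exists i j, (Lb *m G *m Lb^T) i j != 0.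
  have : [exists i, exists j, (Lb *m G *m Lb^T) i j != 0].
    apply: contraNT ndeg; rewrite negb_exists => /forallP h.
    apply/eqP/matrixP => i j; have := h i; rewrite negb_exists => /forallP /(_ j).
    by rewrite negbK => /eqP ->; rewrite mxE.
  by case/existsP => i /existsP [j nz]; exists i, j.
rewrite entry_bform in nz.
have uL : (row i Lb <= L)%MS by rewrite -LbL row_sub.
have vL : (row j Lb <= L)%MS by rewrite -LbL row_sub.
have [e [eL ne]] : exists e, (e <= L)%MS /\ b e e != 0.
  case: (eqVneq (b (row i Lb) (row i Lb)) 0) => [uu|uu]; last by exists (row i Lb).
  case: (eqVneq (b (row j Lb) (row j Lb)) 0) => [vv|vv]; last by exists (row j Lb).
  exists (row i Lb + row j Lb); split; first by rewrite addmx_sub.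
  rewrite bformDl !bformDr uu vv [b (row j Lb) (row i Lb)]bformC add0r addr0.
  by rewrite -mulr2n mulrn_eq0.
set q := b e e.
set Pr := 1%:M - q^-1 *: (G *m e^T *m e).
set L' := L *m Pr.
have ee : e *m G *m e^T = q%:M by rewrite [LHS]mx11_scalar.
have PrGe : Pr *m G *m e^T = 0.
  rewrite /Pr mulmxBl mul1mx mulmxBl -!scalemxAl.
  have -> : G *m e^T *m e *m G *m e^T = G *m e^T *m (e *m G *m e^T) by rewrite !mulmxA.
  by rewrite ee mul_mx_scalar scalerA mulVf // scale1r subrr.
have orth : forall v, (v <= L')%MS -> b v e = 0.
  move=> v /submxP [a ->]; rewrite /bform.
  have -> : a *m L' *m G *m e^T = a *m L *m (Pr *m G *m e^T) by rewrite /L' !mulmxA.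
  by rewrite PrGe mulmx0 mxE.
have L'E : L' = L - q^-1 *: (L *m G *m e^T *m e).
  by rewrite /L' /Pr mulmxBr mulmx1 -scalemxAr !mulmxA.
have L'L : (L' <= L)%MS.
  rewrite L'E addmx_sub // eqmx_opp scalemx_sub //.
  exact: submx_trans (submxMl _ _) eL.
have LL' : (L <= e + L')%MS.
  have -> : L = q^-1 *: (L *m G *m e^T *m e) + L' by rewrite L'E addrC subrK.
  by rewrite addmx_sub_adds // scalemx_sub // submxMl.
have eqL : (e + L' :=: L)%MS by apply/eqmxP; rewrite LL' addsmx_sub eL L'L.
have cap0 : (e :&: L')%MS = 0.
  apply/eqP; apply: contraT => nzc.
  set x := nz_row (e :&: L')%MS.
  have xnz : x != 0 by rewrite nz_row_eq0.
  have := nz_row_sub (e :&: L')%MS; rewrite -/x sub_capmx => /andP [/row_vec_sub [c xe] xL'].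
  have := orth _ xL'; rewrite xe bformZl => /eqP; rewrite mulf_eq0 (negbTE ne) orbF => /eqP c0.
  by move: xnz; rewrite xe c0 scale0r eqxx.
have enz : e != 0 by apply: contraNneq ne => ->; rewrite bform0l.
have rL' : \rank L' = r.
  have := mxrank_disjoint_sum cap0; rewrite eqL rL rank_rV enz.
  move=> h; lia.
have [B' [B'L' dB']] := IH _ L' rL'.
suff [B0 H0] : exists B : 'M[R]_(1 + r, n), (B == L)%MS /\ is_diag_mx (B *m G *m B^T).
  by exists B0.
exists (col_mx e B'); split.
  apply/eqmxP; apply: eqmx_trans (eqmx_sym (addsmxE e B')) _.
  by apply: eqmx_trans (adds_eqmx (eqmx_refl e) (eqmxP B'L')) eqL.
rewrite tr_col_mx mul_col_mx mul_col_row is_diag_block_mx // mx11_is_diag dB' !andbT.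
have o1 : forall j, b e (row j B') = 0.
  move=> j'; rewrite bformC; apply: orth.
  by apply: submx_trans (row_sub _ _) _; move/eqmxP: B'L' => ->.
apply/andP; split; apply/eqP/matrixP => a c; rewrite entry_bform mxE.
  by rewrite (_ : row a e = e) ?o1 //; apply/rowP => k; rewrite !mxE ord1.
by rewrite bformC (_ : row c e = e) ?o1 //; apply/rowP => k; rewrite !mxE ord1.
Qed.
End S.

Unset Implicit Arguments.

Theorem proposition3 (R : realFieldType) (n : nat) (G : 'M[R]_n) (k l : nat)
    (Z : 'M[R]_n) :
  pseudo_euclidean G k l -> (2 <= k)%N -> (2 <= l)%N ->
  (qplus_is G Z k <->
     (forall H : 'M[R]_n, pos_plane G k.-1 H -> extendable G k Z H)) /\
  (qplus_is G Z k <->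
     (forall H : 'M[R]_n, pos_plane G k.-1 H -> orth_extendable G k Z H)).
Proof.
move=> [HG Gu [B0 [B0u dB0 pB0 _]]] k2 _.
set D0 := B0 *m G *m B0^T.
set Vp := selE D0 (fun x => 0 < x) *m B0.
have fB0 : row_free B0 by rewrite row_free_unit.
have rVp : \rank Vp = k by rewrite sel_rank // -pB0.
have pVp : pos_def_on G Vp := sel_pos dB0.
have ub : forall m (P : 'M[R]_(m,n)), pos_def_on G P -> (\rank P <= k)%N.
  move=> m P pP.
  set Vn := selE D0 (fun x => ~~ (0 < x)%R) *m B0.
  have cap : (P :&: Vn)%MS = 0.
    apply/eqP; apply: contraT => nzc.
    set x := nz_row (P :&: Vn)%MS.
    have xnz : x != 0 by rewrite nz_row_eq0.
    have := nz_row_sub (P :&: Vn)%MS; rewrite -/x sub_capmx => /andP [xP xV].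
    have h2 := pP x xP xnz; have h1 := sel_npos dB0 xV.
    by have := le_lt_trans h1 h2; rewrite ltxx.
  have rVn : \rank Vn = (n - k)%N.
    rewrite sel_rank //.
    have := cardsC (selS D0 (fun x => 0 < x)).
    have -> : ~: selS D0 (fun x => 0 < x) = selS D0 (fun x => ~~ (0 < x)).
      by apply/setP => i; rewrite !inE.
    rewrite card_ord.
    have -> : #|selS D0 (fun x => 0 < x)| = k by rewrite -pB0.
    move=> h; have e : forall a b c : nat, (a + b)%N = c -> b = (c - a)%N by move=> *; lia. exact: (e _ _ _ h).
  have := mxrank_disjoint_sum cap; have := rank_leq_col (P + Vn)%MS.
  have := rank_leq_col Vp; rewrite rVp rVn; lia.
have grow : forall d (H : 'M[R]_n), pos_def_on G H -> (\rank H + d)%N = k.-1 ->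
    exists H2 : 'M[R]_n, [/\ pos_def_on G H2, \rank H2 = k.-1 & (H <= H2)%MS].
  elim => [|d IHd] H pH rH.
    by exists H; split => //; rewrite -rH addn0.
  have lt : (\rank H < \rank Vp)%N by rewrite rVp; lia.
  have [y [yV ynz oy]] := L1 HG lt.
  have py := pVp y yV ynz.
  have [pHy rHy] := L2 HG pH oy py.
  have [H2 [p2 r2 s2]] := IHd (H + y)%MS pHy (ltac:(rewrite rHy; lia)).
  by exists H2; split => //; exact: submx_trans (addsmxSl H y) s2.
have i_iii : qplus_is G Z k ->
    forall H : 'M[R]_n, pos_plane G k.-1 H -> orth_extendable G k Z H.
  move=> [B [BZ dB pB]] H [rH pH].
  set Pz := selE (B *m G *m B^T) (fun x => 0 < x) *m B.
  have fB : row_free B by rewrite /row_free; move/eqmxP: BZ => ->.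
  have rPz : \rank Pz = k by rewrite sel_rank // -pB.
  have lt : (\rank H < \rank Pz)%N by rewrite rH rPz; lia.
  have [y [yP ynz oy]] := L1 HG lt.
  have py : 0 < bform G y y := sel_pos dB yP ynz.
  have [pos rk] := L2 HG pH oy py.
  exists y; split => //.
    have BZ' : (B <= Z)%MS by case/andP: BZ.
    exact: submx_trans yP (submx_trans (submxMl _ B) BZ').
  by split => //; rewrite rk rH; lia.
have ii_i : (forall H : 'M[R]_n, pos_plane G k.-1 H -> extendable G k Z H) -> qplus_is G Z k.
  move=> hyp.
  have [B [BZ dB]] := diag_ex HG (erefl (\rank Z)).
  exists B; split => //.
  have fB : row_free B by rewrite /row_free; move/eqmxP: BZ => ->.
  set Pz := selE (B *m G *m B^T) (fun x => 0 < x) *m B.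
  set Mz := selE (B *m G *m B^T) (fun x => ~~ (0 < x)) *m B.
  have rPz : \rank Pz = npos (B *m G *m B^T) by rewrite sel_rank.
  have pPz : pos_def_on G Pz := sel_pos dB.
  have pk : (npos (B *m G *m B^T) <= k)%N by rewrite -rPz; apply: ub.
  apply/eqP; rewrite eqn_leq pk /= leqNgt; apply/negP => ltpk.
  have pgen : pos_def_on G <<Pz>>%MS by move=> v; rewrite genmxE; exact: pPz.
  have [H2 [pH2 rH2 PzH2]] := grow (k.-1 - npos (B *m G *m B^T))%N <<Pz>>%MS pgen
    (ltac:(rewrite genmxE rPz; lia)).
  rewrite genmxE in PzH2.
  have [z [zZ [rk pz]]] := hyp H2 (conj rH2 pH2).
  have zc : (z <= Pz + Mz)%MS.
    apply: submx_trans zZ _; apply: submx_trans (sel_cover G B (fun x => 0 < x)).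
    by move/eqmxP: BZ => ->.
  move/sub_addsmxP: zc => [[u w] /= zE].
  set x := u *m Pz in zE; set mm := w *m Mz in zE.
  have xH : (x <= H2)%MS by exact: submx_trans (submxMl _ _) PzH2.
  have mmE : mm = z - x by rewrite zE addrC addKr.
  have mmz : (mm <= H2 + z)%MS.
    rewrite mmE addmx_sub ?addsmxSr // eqmx_opp.
    exact: submx_trans xH (addsmxSl _ _).
  have [mm0|mmnz] := eqVneq mm 0.
    have zH : (z <= H2)%MS by rewrite zE mm0 addr0.
    have kk : k.-1 != k by clear -k2; lia.
    have e : \rank (H2 + z)%MS = \rank H2 by move/addsmx_idPl: zH => ->.
    by move: kk; rewrite -{1}rH2 -e rk eqxx.
  have h2 := pz mm mmz mmnz.
  have h1 : bform G mm mm <= 0 := sel_npos dB (submxMl w Mz).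
  by have := le_lt_trans h1 h2; rewrite ltxx.
split; split => //.
  by move=> h H pH; have [z [? ? ?]] := i_iii h H pH; exists z.
by move=> h; apply: ii_i => H pH; have [z [? ? ?]] := h H pH; exists z.
Qed.
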